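(* Let $G$ be a finite group acting on a set $S$ via $\bullet: G\times S\to S$ (so $(gh)\bullet x=g\bullet(h\bullet x)$), and let $F\le H\trianglelefteq G$. Let $A$ be a randomized algorithm which takes a list of elements of $G$ and outputs an element of $S$. Define the randomized algorithm $B$ on input $g_1,\dots,g_n\in G$ ($n\ge 2$): sample $f$ uniformly from $F$, compute $(g_1',\dots,g_n')\gets\textsc{Kilian}_H(fg_1,g_2,\dots,g_n)$, and return $f^{-1}\bullet A(g_1',\dots,g_n')$. Then the output distribution of $B(g_1,\dots,g_n)$ is $(g_1\cdots g_n)\bullet\mathcal D$, where $\mathcal D=\mathcal D(Fg_1\cdots g_n,g_1H,\dots,g_nH)$ is the uniform average, over all tuples $(g_1',\dots,g_n')\in G^n$ with $g_1'\cdots g_n'\in Fg_1\cdots g_n$ and $g_i'H=g_iH$ for all $i$, of the distribution of $(g_1'\cdots g_n')^{-1}\bullet A(g_1',\dots,g_n')$.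
   Context: $\textsc{Kilian}_H(g_1,\dots,g_n)$ (for $H\trianglelefteq G$, $n\ge 2$): sample $h_1,\dots,h_{n-1}$ independently and uniformly from $H$; set $g_1'=g_1h_1$, $g_i'=h_{i-1}^{-1}g_ih_i$ for $i=2,\dots,n-1$, and $g_n'=h_{n-1}^{-1}g_n$; return $(g_1',\dots,g_n')$. For a distribution $\mathcal D$ on $S$ and $g\in G$, $g\bullet\mathcal D$ denotes the distribution of $g\bullet x$ for $x\sim\mathcal D$. *)

(* Defs.v *)
From HB Require Import structures.
From mathcomp Require Import all_boot all_order all_fingroup all_algebra.
From mathcomp Require Import reals.
Set Implicit Arguments. Unset Strict Implicit. Unset Printing Implicit Defensive.
Import GRing.Theory Num.Theory.

(* Distributions on a type S are represented by probability mass functions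
   S -> R.  A randomized algorithm taking a list of group elements and
   outputting an element of S is a map  seq gT -> (S -> R). *)

Section Defs.
Variables (gT : finGroupType) (S : Type) (R : realType).

(* g \bullet D : pushforward of D along the bijection x |-> act g x;
   its mass at y is D(g^-1 \bullet y). *)
Definition dact (act : gT -> S -> S) (g : gT) (D : S -> R) : S -> R :=
  fun y => D (act (g^-1)%g y).

Definition unif_mix (T : finType) (P : {pred T}) (K : T -> S -> R) : S -> R :=
  fun y => ((#|P|%:R)^-1 * \sum_(t in P) K t y)%R.

(* Kilian_H applied to the list g with randomness h = (h_1,...,h_{n-1}):
   g'_1 = g_1 h_1, g'_i = h_{i-1}^-1 g_i h_i, g'_n = h_{n-1}^-1 g_n
   (indices shifted to start at 0). *)
Definition kilian_det (g h : seq gT) : seq gT :=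
  mkseq (fun i => ((if i == 0 then 1 else nth 1 h i.-1)^-1 * nth 1 g i *
                   (if i.+1 < size g then nth 1 h i else 1))%g) (size g).

Definition kilian_rand (n : nat) (H : {set gT}) : {pred (n.-1).-tuple gT} :=
  [pred h : (n.-1).-tuple gT | all (fun x => x \in H) h].

Definition kilian_then (n : nat) (H : {set gT}) (g : n.-tuple gT)
  (K : seq gT -> S -> R) : S -> R :=
  unif_mix (@kilian_rand n H) (fun h => K (kilian_det g h)).

Definition gprod (g : seq gT) : gT := (\prod_(x <- g) x)%g.

Definition lmul_first (f : gT) (n : nat) (g : n.-tuple gT) : n.-tuple gT :=
  [tuple (if val i == 0%N then f * tnth g i else tnth g i)%g | i < n].

Definition algB (act : gT -> S -> S) (F H : {set gT}) (A : seq gT -> S -> R)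
  (n : nat) (g : n.-tuple gT) : S -> R :=
  unif_mix (mem F) (fun f => dact act (f^-1)%g (@kilian_then n H (lmul_first f g) A)).

Definition Dcal (act : gT -> S -> S) (F H : {set gT}) (A : seq gT -> S -> R)
  (n : nat) (g : n.-tuple gT) : S -> R :=
  unif_mix [pred g' : n.-tuple gT | ((gprod g' \in F :* gprod g)%g) &&
                                     [forall i : 'I_n, ((tnth g' i *: H)%g == (tnth g i *: H)%g)]]
           (fun g' => dact act ((gprod g')^-1)%g (A g')).

End Defs.

(* Main.v *)
Require Import Defs.
From HB Require Import structures.
From mathcomp Require Import all_boot all_order all_fingroup all_algebra.
From mathcomp Require Import reals.
Set Implicit Arguments. Unset Strict Implicit. Unset Printing Implicit Defensive.
Import GRing.Theory Num.Theory.
Local Open Scope group_scope.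

Definition pre (gT : finGroupType) (s : seq gT) k := \prod_(0 <= j < k) nth 1 s j.
Definition cc (gT : finGroupType) (s h : seq gT) k :=
  if (0 < k)%N && (k < size s)%N then nth 1 h k.-1 else 1.

Lemma pre0 (gT : finGroupType) (s : seq gT) : pre s 0 = 1.
Proof. by rewrite /pre big_geq. Qed.

Lemma preS (gT : finGroupType) (s : seq gT) k : pre s k.+1 = pre s k * nth 1 s k.
Proof. by rewrite /pre big_nat_recr. Qed.

Lemma size_kd (gT : finGroupType) (s h : seq gT) : size (kilian_det s h) = size s.
Proof. by rewrite size_mkseq. Qed.

Lemma nth_kd (gT : finGroupType) (s h : seq gT) i : (i < size s)%N ->
  nth 1 (kilian_det s h) i = (cc s h i)^-1 * nth 1 s i * cc s h i.+1.
Proof.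
move=> lt; rewrite nth_mkseq // /cc; case: i lt => [|i] lt /=; by rewrite ?lt.
Qed.

Lemma pre_kd (gT : finGroupType) (s h : seq gT) k : (k <= size s)%N ->
  pre (kilian_det s h) k = pre s k * cc s h k.
Proof.
elim: k => [|k IH] lt; first by rewrite !pre0 /cc /= mulg1.
by rewrite !preS IH ?(ltnW lt) // nth_kd // !mulgA mulgK.
Qed.

Lemma gprod_pre (gT : finGroupType) (s : seq gT) : gprod s = pre s (size s).
Proof. by rewrite /gprod (big_nth 1). Qed.

Lemma gprod_kd (gT : finGroupType) (s h : seq gT) : gprod (kilian_det s h) = gprod s.
Proof. by rewrite !gprod_pre size_kd pre_kd // /cc ltnn andbF mulg1. Qed.

Lemma nth_lmul (gT : finGroupType) f n (g : n.-tuple gT) i : (i < n)%N ->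
  nth 1 (lmul_first f g) i = (if i == 0%N then f else 1) * nth 1 g i.
Proof.
move=> lt; rewrite -[i]/(nat_of_ord (Ordinal lt)) -!tnth_nth tnth_mktuple /=.
by case: ifP => _; rewrite ?mul1g.
Qed.

Lemma pre_lmul (gT : finGroupType) f n (g : n.-tuple gT) k : (0 < k <= n)%N ->
  pre (lmul_first f g) k = f * pre g k.
Proof.
elim: k => [//|k IH] /andP[_ lt].
rewrite !preS nth_lmul //; case: k IH lt => [|k] IH lt /=.
  by rewrite !pre0 !mul1g.
by rewrite IH ?(ltnW lt) // mul1g mulgA.
Qed.

Lemma gprod_lmul (gT : finGroupType) f n (g : n.-tuple gT) : (0 < n)%N ->
  gprod (lmul_first f g) = f * gprod g.
Proof. by move=> n0; rewrite !gprod_pre !size_tuple pre_lmul // n0 leqnn. Qed.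

Lemma size_kdT (gT : finGroupType) n (s : n.-tuple gT) (h : seq gT) :
  size (kilian_det s h) == n.
Proof. by rewrite size_kd size_tuple. Qed.

Lemma step1 (gT : finGroupType) (a b x y : gT) :
  (a * x)^-1 * (b * y) = (a^-1 * b) ^ x * (x^-1 * y).
Proof. by rewrite invMg conjgE !mulgA mulgK. Qed.

Lemma step2 (gT : finGroupType) (e x y : gT) :
  (e * x)^-1 * y = (e^-1) ^ x * (x^-1 * y).
Proof. by rewrite invMg conjgE !mulgA mulgK. Qed.

Lemma step3 (gT : finGroupType) (a b x y : gT) :
  (a^-1 * b)^-1 * x * ((a * x)^-1 * (b * y)) = y.
Proof. by rewrite !invMg invgK !mulgA mulgK mulgK mulVg mul1g. Qed.

Lemma step4 (gT : finGroupType) (x c e c' : gT) :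
  x^-1 * (c^-1 * (e * x) * c') = (c^-1 * e) ^ x * c'.
Proof. by rewrite conjgE !mulgA. Qed.

Arguments lmul_first : simpl never.
Arguments kilian_det : simpl never.
From mathcomp Require Import zify.
From Stdlib Require Import FunctionalExtensionality.

Theorem mainTheorem7 (gT : finGroupType) (S : Type) (R : realType)
  (act : gT -> S -> S)
  (act1 : forall x, act 1%g x = x)
  (actM : forall (g h : gT) x, act (g * h)%g x = act g (act h x))
  (F H : {group gT}) (FsubH : F \subset H) (Hnormal : (H <| [set: gT])%g)
  (A : seq gT -> S -> R)
  (n : nat) (n_ge2 : (2 <= n)%N) (g : n.-tuple gT) :
  algB act F H A g = dact act (gprod g) (Dcal act F H A g).
Proof.
apply: functional_extensionality => y.
rewrite /algB /Dcal /dact /kilian_then /unif_mix.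
have n0 : (0 < n)%N by apply: leq_trans n_ge2.
have nH : forall x : gT, x \in 'N(H)%g.
  by move=> x; apply: (subsetP (normal_norm Hnormal)); rewrite inE.
have HJ : forall x y : gT, y \in H -> (y ^ x)%g \in H by move=> x z; rewrite memJ_norm.
have FH : forall x, x \in F -> x \in H := subsetP FsubH.
set Hn := @kilian_rand gT n H.
have nthH : forall h : (n.-1).-tuple gT, h \in Hn -> forall j, nth 1%g h j \in H.
  move=> h hH j; case: (ltnP j (size h)) => lt; last by rewrite nth_default.
  by move: hH; rewrite inE => /allP; apply; apply: mem_nth.
have ccH : forall (s : seq gT) h, h \in Hn -> forall k, cc s h k \in H.
  move=> s h hH k; rewrite /cc; case: ifP => _; [exact: nthH | exact: group1].
pose phi (p : gT * (n.-1).-tuple gT) : n.-tuple gT :=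
  Tuple (size_kdT (lmul_first p.1 g) p.2).
have gprod_phi : forall p, gprod (phi p) = p.1 * gprod g.
  by move=> p; rewrite /= gprod_kd gprod_lmul.
set D1 := setX F [set h in Hn].
have inj : {in D1 &, injective phi}.
  move=> [f1 h1] [f2 h2]; rewrite !in_setX !inE => /andP[f1F h1H] /andP[f2F h2H].
  move=> /(congr1 val) E.
  have := congr1 (@gprod gT) E; rewrite !gprod_kd !gprod_lmul // => /mulIg ef.
  move: ef => /= ef; subst f2; congr pair; apply: eq_from_tnth => i.
  have lt : (i.+1 < n)%N by have := ltn_ord i; lia.
  have := congr1 (fun s => pre s i.+1) E.
  rewrite !pre_kd ?size_tuple ?(ltnW lt) // /cc size_tuple lt /= => /mulgI.
  by rewrite !(tnth_nth 1).
have img : forall t : n.-tuple gT,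
  (t \in [pred g' : n.-tuple gT | ((gprod g' \in F :* gprod g)%g) &&
          [forall i : 'I_n, ((tnth g' i *: H)%g == (tnth g i *: H)%g)]])
  = (t \in phi @: D1).
  move=> t; apply/idP/imsetP.
    rewrite inE => /andP[tF /forallP tc].
    set G := gprod g; set G' := gprod t.
    have fF : G' * G^-1 \in F by rewrite -mem_rcoset.
    set f := G' * G^-1.
    set s := lmul_first f g.
    have hc : forall k, (k < n)%N -> (nth 1 g k)^-1 * nth 1 t k \in H.
      move=> k lt; have := tc (Ordinal lt); rewrite !(tnth_nth 1) /=.
      by move=> /eqP/lcoset_eqP; rewrite mem_lcoset.
    have preH : forall k, (k <= n)%N -> (pre s k)^-1 * pre t k \in H.
      elim=> [|k IH] lt; first by rewrite !pre0 invg1 mul1g group1.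
      rewrite !preS step1 groupM ?HJ ?IH ?(ltnW lt) //.
      rewrite nth_lmul // step2 groupM ?HJ ?hc //.
      by rewrite groupV; case: (k == 0%N); [exact: FH | exact: group1].
    pose h := [tuple (pre s i.+1)^-1 * pre t i.+1 | i < n.-1].
    exists (f, h).
      rewrite in_setX fF inE /=; apply/(all_nthP 1) => i; rewrite size_tuple => lt.
      rewrite -[i]/(nat_of_ord (Ordinal lt)) nth_mktuple /=; apply: preH; lia.
    have ccE : forall k, (k <= n)%N -> cc s h k = (pre s k)^-1 * pre t k.
      move=> k le; rewrite /cc size_tuple; case: k le => [|k] le /=.
        by rewrite !pre0 invg1 mulg1.
      case: ltnP => lt'.
        have lt2 : (k < n.-1)%N by lia.
        by rewrite -[k]/(nat_of_ord (Ordinal lt2)) nth_mktuple.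
      have -> : k.+1 = n by lia.
      have -> : pre s n = G'.
        have -> : pre s n = pre s (size s) by rewrite size_tuple.
        by rewrite -gprod_pre gprod_lmul // mulgKV.
      have -> : pre t n = pre t (size t) by rewrite size_tuple.
      by rewrite -gprod_pre mulVg.
    apply: val_inj; apply: (@eq_from_nth _ 1); rewrite ?size_tuple // => i lt.
    change (nth 1 t i = nth 1 (kilian_det s h) i).
    rewrite nth_kd ?size_tuple // (ccE i) ?(ltnW lt) // (ccE i.+1) // !preS.
    by rewrite step3.
  case=> [[f h]] pD ->; move: pD; rewrite in_setX inE => /andP[fF hH].
  rewrite inE; apply/andP; split.
    by rewrite gprod_phi mem_rcoset mulgK.
  apply/forallP => i; apply/eqP/lcoset_eqP; rewrite mem_lcoset !(tnth_nth 1).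
  change ((nth 1 g i)^-1 * nth 1 (kilian_det (lmul_first f g) h) i \in H).
  rewrite nth_kd ?size_tuple // nth_lmul // step4 groupM ?ccH // HJ // groupM ?groupV ?ccH //.
  by case: (i == 0%N :> nat); [exact: FH | exact: group1].
rewrite (eq_card img) (eq_bigl _ _ img) big_imset // card_in_imset // cardsX cardsE.
rewrite -GRing.mulr_sumr GRing.mulrA -GRing.invfM -natrM pair_big /=.
congr (_ * _)%R.
apply: eq_big => [[f h]|[f h] _]; first by rewrite in_setX inE.
rewrite gprod_phi /= !invgK actM -(actM (gprod g)) mulgV act1.
by [].
Qed.
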